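(* Let $g:\mathbb{R}^d\to\mathbb{R}$ be $p$ times differentiable ($p\ge1$) with $\nabla^pg$ being $L_p$-Lipschitz, and let $L\ge0$. Define $\mathcal T(x)$ to be a minimizer (assumed to exist) of $y\mapsto g_p(y;x)+\frac{L_p+L}{p!}\|y-x\|^{p+1}$, where $g_p(y;x)$ is the $p$-th order Taylor approximation of $g$ about $x$ evaluated at $y$. Then $\mathcal T$ is a $\big((1+p)^{-1}(1+L/L_p)^{-1},\,0\big)$-approximate $\omega$-proximal step oracle for $g$ with $\omega(s)=\frac{(L_p+L)(p+1)}{p!}s^{p-1}$.
   Context: An $(\alpha,\delta)$-approximate $\omega$-proximal step oracle for $g$ is a procedure that, queried at any $x\in\mathbb{R}^d$, returns some $y$ with $\|\nabla g(y)+\omega(\|y-x\|)(y-x)\|\le\alpha\,\omega(\|y-x\|)\|y-x\|+\delta$. *)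

(* Defs.v *)
From Stdlib Require Import Reals.
From mathcomp Require Import ssreflect ssrfun ssrbool eqtype ssrnat seq fintype bigop.
Set Implicit Arguments. Unset Strict Implicit.
Open Scope R_scope.

Definition vec (d : nat) := 'I_d -> R.
Definition vadd {d} (u v : vec d) : vec d := fun i => u i + v i.
Definition vsub {d} (u v : vec d) : vec d := fun i => u i - v i.
Definition vscale {d} (a : R) (u : vec d) : vec d := fun i => a * u i.
Definition dot {d} (u v : vec d) : R := \big[Rplus/0]_(i < d) (u i * v i).
Definition vnorm {d} (u : vec d) : R := sqrt (dot u u).
Definition basis {d} (i : 'I_d) : vec d := fun j => if j == i then 1 else 0.

(** k-linear forms on R^d are represented as functions of a list of k vectors. *)
Definition multilinear {d} (k : nat) (T : seq (vec d) -> R) : Prop :=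
  forall (us vs : seq (vec d)) (a b : R) (u v : vec d),
    (size us + size vs + 1 = k)%N ->
    T (us ++ vadd (vscale a u) (vscale b v) :: vs)
    = a * T (us ++ u :: vs) + b * T (us ++ v :: vs).

Definition unit_list {d} (us : seq (vec d)) : Prop :=
  List.Forall (fun u => vnorm u <= 1) us.

(** [derivs_of g p D]: g is p times (Frechet) differentiable and D k x is the
    k-th derivative D^k g(x), a k-linear form; D (k+1) is the Frechet
    derivative of x |-> D k x in operator norm:
    D^k g(x+h)[us] = D^k g(x)[us] + D^{k+1} g(x)[us, h] + o(|h|) uniformly
    for us in the unit ball. *)
Definition derivs_of {d} (g : vec d -> R) (p : nat)
    (D : nat -> vec d -> seq (vec d) -> R) : Prop :=
  (forall x, D 0%N x [::] = g x) /\
  (forall k x, (k <= p)%N -> multilinear k (D k x)) /\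
  (forall k x, (k < p)%N -> forall eps, 0 < eps -> exists delta, 0 < delta /\
     forall h : vec d, vnorm h < delta ->
     forall us, size us = k -> unit_list us ->
       Rabs (D k (vadd x h) us - D k x us - D k.+1 x (rcons us h))
         <= eps * vnorm h).

Definition top_deriv_lipschitz {d} (D : nat -> vec d -> seq (vec d) -> R)
    (p : nat) (Lp : R) : Prop :=
  forall x y us, size us = p -> unit_list us ->
    Rabs (D p x us - D p y us) <= Lp * vnorm (vsub x y).

Definition grad {d} (D : nat -> vec d -> seq (vec d) -> R) (y : vec d) : vec d :=
  fun i => D 1%N y [:: basis i].

Definition taylor {d} (D : nat -> vec d -> seq (vec d) -> R) (p : nat)
    (x y : vec d) : R :=
  \big[Rplus/0]_(k < p.+1) (D k x (nseq k (vsub y x)) / INR (k`!)).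

Definition reg_model {d} (D : nat -> vec d -> seq (vec d) -> R) (p : nat)
    (Lp L : R) (x y : vec d) : R :=
  taylor D p x y + (Lp + L) / INR (p`!) * vnorm (vsub y x) ^ (p.+1).

Definition approx_prox_oracle {d} (gradg : vec d -> vec d) (omega : R -> R)
    (alpha delta : R) (O : vec d -> vec d) : Prop :=
  forall x : vec d,
    vnorm (vadd (gradg (O x)) (vscale (omega (vnorm (vsub (O x) x))) (vsub (O x) x)))
      <= alpha * omega (vnorm (vsub (O x) x)) * vnorm (vsub (O x) x) + delta.

Definition omega_p (Lp L : R) (p : nat) (s : R) : R :=
  (Lp + L) * INR (p.+1) / INR (p`!) * s ^ (p - 1)%N.

(* Main.v *)
Require Import Defs.
From Stdlib Require Import Reals Lra FunctionalExtensionality.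
From HB Require Import structures.
From mathcomp Require Import ssreflect ssrfun ssrbool eqtype ssrnat seq fintype bigop.
Open Scope R_scope.
Set Implicit Arguments. Unset Strict Implicit.

HB.instance Definition _ := Monoid.isComLaw.Build R 0 Rplus (fun a b c => esym (Rplus_assoc a b c)) Rplus_comm Rplus_0_l.
HB.instance Definition _ := Monoid.isMulLaw.Build R 0 Rmult Rmult_0_l Rmult_0_r.
HB.instance Definition _ := Monoid.isAddLaw.Build R Rmult Rplus Rmult_plus_distr_r Rmult_plus_distr_l.

Ltac vext := apply functional_extensionality => ?; rewrite /vadd /vscale /vsub; ring.

Section V.
Variable d : nat.
Implicit Types u v w : vec d.

Lemma dot_addl u v w : dot (vadd u v) w = dot u w + dot v w.
Proof. rewrite /dot -big_split; apply: eq_bigr => i _; rewrite /vadd; cbn; ring. Qed.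
Lemma dot_scalel a u w : dot (vscale a u) w = a * dot u w.
Proof. rewrite /dot big_distrr; apply: eq_bigr => i _; rewrite /vscale; cbn; ring. Qed.
Lemma dot_sym u v : dot u v = dot v u.
Proof. rewrite /dot; apply: eq_bigr => i _; ring. Qed.
Lemma dot_addr u v w : dot w (vadd u v) = dot w u + dot w v.
Proof. by rewrite dot_sym dot_addl !(dot_sym w). Qed.
Lemma dot_scaler a u w : dot w (vscale a u) = a * dot w u.
Proof. by rewrite dot_sym dot_scalel (dot_sym w). Qed.
Lemma dot_ge0 u : 0 <= dot u u.
Proof. rewrite /dot; apply: big_ind => //; [lra | move=> *; lra | move=> i _; nra]. Qed.

Lemma vnorm_ge0 u : 0 <= vnorm u.
Proof. apply: sqrt_pos. Qed.
Lemma vnorm_sq u : vnorm u * vnorm u = dot u u.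
Proof. rewrite /vnorm sqrt_sqrt //; apply dot_ge0. Qed.

Lemma vnorm_scale a u : vnorm (vscale a u) = Rabs a * vnorm u.
Proof.
rewrite /vnorm dot_scalel dot_scaler -Rmult_assoc sqrt_mult.
- by rewrite -sqrt_Rsqr_abs.
- nra.
- apply dot_ge0.
Qed.

Lemma dot_expand h u t :
  dot (vadd h (vscale t u)) (vadd h (vscale t u)) = dot h h + 2 * t * dot h u + t * t * dot u u.
Proof. rewrite !dot_addl !dot_addr !dot_scalel !dot_scaler (dot_sym u h); ring. Qed.

Lemma cs u v : Rabs (dot u v) <= vnorm u * vnorm v.
Proof.
have H : forall l, 0 <= dot u u + 2 * l * dot u v + l * l * dot v v.
  by move=> l; rewrite -dot_expand; apply dot_ge0.
have Hsq : dot u v * dot u v <= dot u u * dot v v.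
  have := dot_ge0 v; have := dot_ge0 u => Hu Hv.
  case: (Rle_lt_or_eq_dec _ _ Hv) => Hb.
  - have := H (- dot u v / dot v v).
    have -> : dot u u + 2 * (- dot u v / dot v v) * dot u v +
        - dot u v / dot v v * (- dot u v / dot v v) * dot v v
        = (dot u u * dot v v - dot u v * dot u v) / dot v v by field; lra.
    move=> H1.
    have : 0 <= (dot u u * dot v v - dot u v * dot u v) / dot v v * dot v v by nra.
    rewrite /Rdiv Rmult_assoc Rinv_l; lra.
  - rewrite -Hb.
    case: (Req_dec (dot u v) 0) => HX; first by rewrite HX; lra.
    have := H (- (dot u u + 1) / (2 * dot u v)).
    rewrite -Hb.
    have -> : dot u u + 2 * (- (dot u u + 1) / (2 * dot u v)) * dot u v +
       - (dot u u + 1) / (2 * dot u v) * (- (dot u u + 1) / (2 * dot u v)) * 0 = -1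
      by field.
    lra.
rewrite /vnorm -sqrt_mult; try apply dot_ge0.
rewrite -sqrt_Rsqr_abs; apply sqrt_le_1_alt; rewrite /Rsqr; lra.
Qed.

Lemma vnorm_tri h u t : 0 <= t -> vnorm (vadd h (vscale t u)) <= vnorm h + t * vnorm u.
Proof.
move=> Ht.
have Hc := cs h u. have := vnorm_ge0 h; have := vnorm_ge0 u => Hu Hh.
have Hdu := Rle_abs (dot h u).
apply Rsqr_incr_0_var; last by nra.
rewrite /Rsqr vnorm_sq dot_expand -(vnorm_sq h) -(vnorm_sq u). nra.
Qed.

End V.

Section ML.
Variable d : nat.
Implicit Types u v w : vec d.

Lemma ml_scale k (T : seq (vec d) -> R) us vs a u :
  multilinear k T -> (size us + size vs + 1 = k)%N ->
  T (us ++ vscale a u :: vs) = a * T (us ++ u :: vs).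
Proof.
move=> HT Hs.
have -> : vscale a u = vadd (vscale a u) (vscale 0 u) by vext.
rewrite HT //; ring.
Qed.

Lemma ml_sub k (T : seq (vec d) -> R) us vs u v :
  multilinear k T -> (size us + size vs + 1 = k)%N ->
  T (us ++ vsub u v :: vs) = T (us ++ u :: vs) - T (us ++ v :: vs).
Proof.
move=> HT Hs.
have -> : vsub u v = vadd (vscale 1 u) (vscale (-1) v) by vext.
rewrite HT //; ring.
Qed.

Lemma ml_diff k (T1 T2 : seq (vec d) -> R) :
  multilinear k T1 -> multilinear k T2 -> multilinear k (fun us => T1 us - T2 us).
Proof. move=> H1 H2 us vs a b u v Hs; rewrite H1 // H2 //; ring. Qed.

Definition prodn (us : seq (vec d)) := foldr (fun u acc => vnorm u * acc) 1 us.

Lemma prodn_ge0 us : 0 <= prodn us.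
Proof. elim: us => [|u us IH] /=; first lra. apply Rmult_le_pos => //; apply vnorm_ge0. Qed.

Lemma prodn_nseq n k : prodn (nseq n k) = vnorm k ^ n.
Proof. by elim: n => [|n IH] //=; rewrite IH. Qed.

Lemma unit_rcons us v : unit_list us -> vnorm v <= 1 -> unit_list (rcons us v).
Proof.
elim: us => [|u us IH] /= Hu Hv; first by constructor.
inversion Hu; subst; constructor => //; exact: IH.
Qed.

Lemma opnorm k (T : seq (vec d) -> R) C :
  multilinear k T ->
  (forall us, size us = k -> unit_list us -> Rabs (T us) <= C) ->
  forall us, size us = k -> Rabs (T us) <= C * prodn us.
Proof.
move=> HT HC.
suff H : forall vs us, (size us + size vs = k)%N -> unit_list us ->
   Rabs (T (us ++ vs)) <= C * prodn vs.
  by move=> us Hs; apply: (H us [::]) => //; constructor.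
elim => [|v vs IH] us Hs Hu.
  by rewrite cats0 /= Rmult_1_r; apply HC => //; rewrite -Hs addn0.
have Hs' : (size us + size vs + 1 = k)%N by rewrite -Hs /= addn1 addnS.
have Hsr : forall w, (size (rcons us w) + size vs = k)%N
  by move=> w; rewrite size_rcons -Hs /= addSn addnS.
have Hv := vnorm_ge0 v.
case: (Rle_lt_or_eq_dec _ _ Hv) => Hv0.
- set v' := vscale (/ vnorm v) v.
  have Ev : v = vscale (vnorm v) v'.
    apply functional_extensionality => i; rewrite /v' /vscale; field; lra.
  rewrite /= Ev (ml_scale _ _ HT Hs') -cat_rcons Rabs_mult (Rabs_pos_eq _ Hv).
  have := IH (rcons us v') (Hsr v') (unit_rcons Hu _).
  have Hn : vnorm v' = 1.
    rewrite /v' vnorm_scale Rabs_pos_eq; [field; lra | left; apply Rinv_0_lt_compat; lra].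
  rewrite Hn => H; have {}H := H (Rle_refl 1).
  rewrite -Ev; nra.
- set X := T (us ++ v :: vs).
  have HX : X = 0.
    have Hl : forall l, Rabs (l * X) <= C * prodn vs.
      move=> l; rewrite /X -(ml_scale _ _ HT Hs') -cat_rcons; apply IH => //.
      apply unit_rcons => //; rewrite vnorm_scale -Hv0; lra.
    case: (Req_dec X 0) => // HX.
    have := Hl ((Rabs (C * prodn vs) + 1) / Rabs X).
    rewrite Rabs_mult Rabs_pos_eq.
    + rewrite /Rdiv Rmult_assoc Rinv_l; last by apply Rabs_no_R0.
      have := Rle_abs (C * prodn vs); lra.
    + apply Rmult_le_pos; [have := Rabs_pos (C * prodn vs); lra|].
      left; apply Rinv_0_lt_compat, Rabs_pos_lt => //.
  rewrite HX Rabs_R0 /= -Hv0; lra.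
Qed.
End ML.

Section DER.
Variables (d p : nat) (g : vec d -> R) (D : nat -> vec d -> seq (vec d) -> R).
Hypothesis HD : derivs_of g p D.

Lemma ml_rcons k (T : seq (vec d) -> R) h :
  multilinear k.+1 T -> multilinear k (fun w => T (rcons w h)).
Proof.
move=> HT us vs a b u v Hs /=; rewrite !rcons_cat /= HT //.
by rewrite size_rcons -Hs !addn1 addnS.
Qed.

Lemma mlD k z : (k <= p)%N -> multilinear k (D k z).
Proof. by case: HD => _ [H _] Hk; apply H. Qed.

Lemma deriv_bound k : (k < p)%N -> forall z eps, 0 < eps -> exists delta, 0 < delta /\
  forall h, vnorm h < delta -> forall us, size us = k ->
  Rabs (D k (vadd z h) us - D k z us - D k.+1 z (rcons us h)) <= eps * vnorm h * prodn us.
Proof.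
move=> Hk z eps He.
case: HD => _ [_ H3].
have [delta [Hd Hb]] := H3 k z Hk eps He.
exists delta; split => // h Hh.
apply: (opnorm (T := fun w => D k (vadd z h) w - D k z w - D k.+1 z (rcons w h))).
- apply ml_diff; first apply ml_diff; try apply mlD; try exact: ltnW.
  by apply ml_rcons, mlD.
- move=> us Hs Hu; exact: Hb.
Qed.

Lemma line_deriv k : (k < p)%N -> forall z v us s0, size us = k ->
  derivable_pt_lim (fun s => D k (vadd z (vscale s v)) us) s0
    (D k.+1 (vadd z (vscale s0 v)) (rcons us v)).
Proof.
move=> Hk z v us s0 Hs eps He.
set z0 := vadd z (vscale s0 v).
set P := prodn us. set N := vnorm v.
have HP : 0 <= P by apply prodn_ge0.
have HN : 0 <= N by apply vnorm_ge0.
have He' : 0 < eps / (N * P + 1) by apply Rdiv_lt_0_compat; nra.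
have [delta [Hd Hb]] := deriv_bound Hk z0 He'.
have Hdp : 0 < delta / (N + 1) by apply Rdiv_lt_0_compat; lra.
exists (mkposreal _ Hdp) => dl Hdl /= Hdlt.
have Eh : vadd z (vscale (s0 + dl) v) = vadd z0 (vscale dl v) by rewrite /z0; vext.
rewrite Eh.
have Hnh : vnorm (vscale dl v) < delta.
  rewrite vnorm_scale.
  have Ha := Rabs_pos dl.
  have : Rabs dl * (N + 1) < delta.
    have E : delta / (N+1) * (N+1) = delta by field; lra.
    rewrite -{1}E; apply Rmult_lt_compat_r; lra.
  rewrite -/N; nra.
have := Hb _ Hnh us Hs.
have Hml := @mlD k.+1 z0 Hk.
have Hsz : (size us + size (@nil (vec d)) + 1 = k.+1)%N by rewrite Hs addn0 addn1.
rewrite -cats1 (ml_scale _ _ Hml Hsz).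
rewrite cats1 vnorm_scale -/P -/N => Hbd.
set A := D k (vadd z0 (vscale dl v)) us - D k z0 us - dl * D k.+1 z0 (rcons us v).
have -> : (D k (vadd z0 (vscale dl v)) us - D k z0 us) / dl - D k.+1 z0 (rcons us v) = A / dl
  by rewrite /A; field.
rewrite /Rdiv Rabs_mult Rabs_inv.
have Hadl : 0 < Rabs dl by apply Rabs_pos_lt.
apply (Rmult_lt_reg_r (Rabs dl)) => //.
rewrite Rmult_assoc Rinv_l; last lra.
have : eps / (N * P + 1) * (Rabs dl * N) * P < eps * Rabs dl.
  have -> : eps / (N * P + 1) * (Rabs dl * N) * P = (eps * Rabs dl) * (N * P / (N * P + 1)) by field; nra.
  have : N * P / (N * P + 1) < 1.
    apply (Rmult_lt_reg_r (N * P + 1)); first nra.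
    field_simplify; nra.
  have : 0 < eps * Rabs dl by nra.
  nra.
have HA : Rabs A <= eps / (N * P + 1) * (Rabs dl * N) * P by exact Hbd.
lra.
Qed.
End DER.

Lemma dpl_ext (f g : R -> R) x l : (forall t, f t = g t) -> derivable_pt_lim g x l -> derivable_pt_lim f x l.
Proof. by move=> H; have -> : f = g by apply functional_extensionality. Qed.
Lemma dpl_eq (f : R -> R) x l l' : l = l' -> derivable_pt_lim f x l -> derivable_pt_lim f x l'.
Proof. by move=> ->. Qed.

Lemma INR_fact_pos n : 0 < INR (n`!).
Proof. apply lt_0_INR; apply/ltP; exact: fact_gt0. Qed.

Lemma INR_factS n : INR (n.+1`!) = INR n.+1 * INR (n`!).
Proof. by rewrite factS -multE mult_INR. Qed.

Lemma sum_deriv n (F G : nat -> R -> R) s :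
  (forall j, (j < n)%N -> derivable_pt_lim (F j) s (G j s)) ->
  derivable_pt_lim (fun t => \big[Rplus/0]_(j < n) F j t) s (\big[Rplus/0]_(j < n) G j s).
Proof.
elim: n => [|n IH] H.
  apply: (dpl_ext (g := fun _ => 0)); first by move=> t; rewrite big_ord0.
  rewrite big_ord0; apply derivable_pt_lim_const.
apply: (dpl_ext (g := fun t => \big[Rplus/0]_(j < n) F j t + F n t)).
  by move=> t; rewrite big_ord_recr.
rewrite big_ord_recr /=.
apply derivable_pt_lim_plus; last by apply H.
by apply IH => j Hj; apply H; apply: ltnW.
Qed.

Lemma term_deriv c j s :
  derivable_pt_lim (fun t => c * t ^ j.+1 / INR (j.+1`!)) s (c * s ^ j / INR (j`!)).
Proof.
have Hf := INR_fact_pos j.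
apply: (dpl_ext (g := mult_real_fct (c / INR (j.+1`!)) (pow^~ j.+1))).
  by move=> t; rewrite /mult_real_fct; field; apply Rgt_not_eq, INR_fact_pos.
apply: dpl_eq; last by apply derivable_pt_lim_scal, derivable_pt_lim_pow.
rewrite INR_factS S_INR /=; field; split; [lra | have := pos_INR j; lra].
Qed.

Definition tsum (f : nat -> R -> R) n s := \big[Rplus/0]_(j < n.+1) (f j 0 * s ^ j / INR (j`!)).

Lemma tsum_deriv f n s : derivable_pt_lim (tsum f n.+1) s (tsum (fun j => f j.+1) n s).
Proof.
apply: (dpl_ext (g := fun t => f 0%N 0 + \big[Rplus/0]_(j < n.+1) (f j.+1 0 * t ^ j.+1 / INR (j.+1`!)))).
  move=> t; rewrite /tsum big_ord_recl /= /Rdiv Rinv_1; congr (_ + _); first ring.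
apply: dpl_eq; last first.
  apply derivable_pt_lim_plus; first apply derivable_pt_lim_const.
  apply: (@sum_deriv n.+1 (fun j t => f j.+1 0 * t ^ j.+1 / INR (j.+1`!)) (fun j t => f j.+1 0 * t ^ j / INR (j`!))) => j _.
  apply term_deriv.
by rewrite /tsum Rplus_0_l.
Qed.

Lemma tsum0 f n : tsum f n 0 = f 0%N 0.
Proof.
rewrite /tsum big_ord_recl big1 /=; first by cbn; field.
by move=> i _; rewrite /Rdiv !(Rmult_0_l, Rmult_0_r).
Qed.

Lemma abs_le_both x y : Rabs x <= y -> x <= y /\ - x <= y.
Proof. rewrite /Rabs; case: Rcase_abs; lra. Qed.

Lemma nonpos_deriv (H H' : R -> R) :
  (forall s, 0 <= s <= 1 -> derivable_pt_lim H s (H' s)) ->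
  (forall s, 0 <= s <= 1 -> H' s <= 0) -> H 0 = 0 ->
  forall s, 0 <= s <= 1 -> H s <= 0.
Proof.
move=> Hd Hn H0 s Hs.
case: (Rle_lt_or_eq_dec 0 s (proj1 Hs)) => Hs0; last by rewrite -Hs0 H0; lra.
have [c [Hc1 Hc2]] := MVT_cor2 H H' 0 s Hs0 (fun c Hc => Hd c (conj (proj1 Hc) (Rle_trans _ _ _ (proj2 Hc) (proj2 Hs)))).
have := Hn c (conj (Rlt_le _ _ (proj1 Hc2)) (Rle_trans _ _ _ (Rlt_le _ _ (proj2 Hc2)) (proj2 Hs))).
nra.
Qed.

Lemma taylor1d n : forall (f : nat -> R -> R) K,
  (forall j s, (j < n)%N -> derivable_pt_lim (f j) s (f j.+1 s)) ->
  (forall s, 0 <= s <= 1 -> Rabs (f n s - f n 0) <= K * s) ->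
  forall s, 0 <= s <= 1 -> Rabs (f 0%N s - tsum f n s) <= K * s ^ n.+1 / INR (n.+1`!).
Proof.
elim: n => [|n IH] f K Hd Hb s Hs.
  rewrite /tsum big_ord1 /= /Rdiv Rinv_1 !Rmult_1_r; exact: Hb.
have IH' := IH (fun j => f j.+1) K (fun j s Hj => Hd j.+1 s Hj) Hb.
set E := fun t => f 0%N t - tsum f n.+1 t.
set E' := fun t => f 1%N t - tsum (fun j => f j.+1) n t.
have HE : forall t, derivable_pt_lim E t (E' t).
  move=> t; apply derivable_pt_lim_minus; [by apply Hd | apply tsum_deriv].
set B := fun t => K * t ^ n.+2 / INR (n.+2`!).
have HB : forall t, derivable_pt_lim B t (K * t ^ n.+1 / INR (n.+1`!)) by move=> t; apply term_deriv.
have HE0 : E 0 = 0 by rewrite /E tsum0; ring.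
have HB0 : B 0 = 0 by rewrite /B /=; field; apply Rgt_not_eq, INR_fact_pos.
have H1 : E s - B s <= 0.
  apply: (nonpos_deriv (H := fun t => E t - B t) (H' := fun t => E' t - K * t ^ n.+1 / INR (n.+1`!))) => //.
  - by move=> t _; apply derivable_pt_lim_minus.
  - by move=> t Ht; have := IH' t Ht; move/abs_le_both => [Ha Hb2]; rewrite /E'; lra.
  - by rewrite HE0 HB0; ring.
have H2 : - E s - B s <= 0.
  apply: (nonpos_deriv (H := fun t => - E t - B t) (H' := fun t => - E' t - K * t ^ n.+1 / INR (n.+1`!))) => //.
  - by move=> t _; apply derivable_pt_lim_minus => //; apply derivable_pt_lim_opp.
  - by move=> t Ht; have := IH' t Ht; move/abs_le_both => [Ha Hb2]; rewrite /E'; lra.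
  - by rewrite HE0 HB0; ring.
rewrite -/(E s); apply Rabs_le; rewrite /B in H1 H2; lra.
Qed.

Lemma prodn_cat d (a b : seq (vec d)) : prodn (a ++ b) = prodn a * prodn b.
Proof. elim: a => [|u a IH] /=; first ring. rewrite IH; ring. Qed.

Lemma telescope d p (Q : seq (vec d) -> R) C (k h : vec d) M :
  multilinear p Q -> 0 <= C ->
  (forall w, size w = p -> Rabs (Q w) <= C * prodn w) ->
  vnorm k <= M -> vnorm h <= M ->
  forall n us, (size us + n = p)%N ->
  Rabs (Q (us ++ nseq n k) - Q (us ++ nseq n h)) <=
    C * prodn us * INR n * vnorm (vsub k h) * M ^ n.-1.
Proof.
move=> HQ HC Hb Hk Hh.
elim => [|n IH] us Hs.
  rewrite /= Rminus_diag Rabs_R0 /=; lra.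
have Hs1 : (size us + size (nseq n k) + 1 = p)%N by rewrite size_nseq -Hs addn1 addnS.
have Hs2 : (size (rcons us h) + n = p)%N by rewrite size_rcons -Hs addSn addnS.
have E : Q (us ++ nseq n.+1 k) - Q (us ++ nseq n.+1 h) =
  Q (us ++ vsub k h :: nseq n k) + (Q (rcons us h ++ nseq n k) - Q (rcons us h ++ nseq n h)).
  by rewrite !cat_rcons (ml_sub _ _ HQ Hs1) /=; ring.
rewrite E.
have B1 : Rabs (Q (us ++ vsub k h :: nseq n k)) <= C * prodn us * vnorm (vsub k h) * M ^ n.
  apply: Rle_trans; first apply Hb.
    by rewrite size_cat /= size_nseq -Hs addnS.
  rewrite prodn_cat /= prodn_nseq.
  have := prodn_ge0 us; have := vnorm_ge0 (vsub k h); have := vnorm_ge0 k => H1 H2 H3.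
  have : vnorm k ^ n <= M ^ n by apply pow_incr.
  have : 0 <= vnorm k ^ n by apply pow_le.
  have : 0 <= C * prodn us * vnorm (vsub k h) by apply Rmult_le_pos => //; apply Rmult_le_pos.
  nra.
have B2 := IH _ Hs2.
have Pr : prodn (rcons us h) = prodn us * vnorm h by rewrite -cats1 prodn_cat /= Rmult_1_r.
rewrite Pr in B2.
have HM : 0 <= M by have := vnorm_ge0 k; lra.
have B3 : INR n * (vnorm h * M ^ n.-1) <= INR n * M ^ n.
  clear IH B1 B2 E Hs1 Hs2 Hs; case: n => [|n]; first (simpl; lra).
  change (n.+1.-1) with n; change (M ^ n.+1) with (M * M ^ n).
  apply Rmult_le_compat_l; first apply pos_INR.
  apply Rmult_le_compat_r => //; apply pow_le => //.
have := prodn_ge0 us; have := vnorm_ge0 (vsub k h) => H2 H3.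
have H4 : 0 <= C * prodn us * vnorm (vsub k h) by apply Rmult_le_pos => //; apply Rmult_le_pos.
apply: Rle_trans; first apply Rabs_triang.
rewrite S_INR /=.
have -> : C * prodn us * (INR n + 1) * vnorm (vsub k h) * M ^ n =
  C * prodn us * vnorm (vsub k h) * M ^ n + C * prodn us * vnorm (vsub k h) * (INR n * M ^ n) by ring.
apply Rplus_le_compat => //.
apply: Rle_trans; first exact B2.
have -> : C * (prodn us * vnorm h) * INR n * vnorm (vsub k h) * M ^ n.-1 =
  C * prodn us * vnorm (vsub k h) * (INR n * (vnorm h * M ^ n.-1)) by ring.
by apply Rmult_le_compat_l.
Qed.

Lemma nseqSr T n (a : T) : nseq n.+1 a = rcons (nseq n a) a.
Proof. by elim: n => //= n <-. Qed.

Lemma aux_pow n (a M : R) : 0 <= a <= M -> INR n * (a * M ^ n.-1) <= INR n * M ^ n.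
Proof.
move=> [Ha HaM]; case: n => [|n]; first (simpl; lra).
change (n.+1.-1) with n; change (M ^ n.+1) with (M * M ^ n).
apply Rmult_le_compat_l; first apply pos_INR.
apply Rmult_le_compat_r => //; apply pow_le; lra.
Qed.

Lemma big_sub n (F G : 'I_n -> R) :
  \big[Rplus/0]_(i < n) (F i - G i) = \big[Rplus/0]_(i < n) F i - \big[Rplus/0]_(i < n) G i.
Proof.
elim: n F G => [|n IH] F G; first by rewrite !big_ord0; ring.
rewrite !big_ord_recr IH /=; ring.
Qed.

Section EB.
Variables (d p : nat) (g : vec d -> R) (D : nat -> vec d -> seq (vec d) -> R) (Lp : R).
Hypothesis HD : derivs_of g p D.
Hypothesis HL : top_deriv_lipschitz D p Lp.

Lemma lip_gen a b us : size us = p -> Rabs (D p a us - D p b us) <= Lp * vnorm (vsub a b) * prodn us.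
Proof.
move=> Hs; apply: (@opnorm d p (fun w => D p a w - D p b w) (Lp * vnorm (vsub a b)) _ _ us Hs).
- by apply ml_diff; apply (mlD HD).
- by move=> w Hw Hu; apply HL.
Qed.

Lemma e_bound x y u t : 0 <= Lp -> 0 <= t ->
  Rabs ((D 0%N (vadd y (vscale t u)) [::] - taylor D p x (vadd y (vscale t u)))
        - (D 0%N y [::] - taylor D p x y))
  <= Lp * t * vnorm u * (vnorm (vsub y x) + t * vnorm u) ^ p / INR (p`!).
Proof.
move=> HLp Ht.
set z := vadd y (vscale t u).
set h := vsub y x. set k := vsub z x.
set M := vnorm h + t * vnorm u.
have Hu0 := vnorm_ge0 u. have Hh0 := vnorm_ge0 h.
have Ek : k = vadd h (vscale t u) by rewrite /k /z /h; vext.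
have HkM : vnorm k <= M by rewrite Ek; apply vnorm_tri.
have HhM : vnorm h <= M by rewrite /M; nra.
have Ekh : vsub k h = vscale t u by rewrite Ek; vext.
have Ntu : vnorm (vscale t u) = t * vnorm u by rewrite vnorm_scale Rabs_pos_eq.
set f := fun j s => D j (vadd x (vscale s k)) (nseq j k) - D j (vadd x (vscale s h)) (nseq j h).
set K := Lp * t * vnorm u * INR p.+1 * M ^ p.
have Hx0 : forall w, vadd x (vscale 0 w) = x by move=> w; vext.
have HT := @taylor1d p f K.
have Hder : forall j s, (j < p)%N -> derivable_pt_lim (f j) s (f j.+1 s).
  move=> j s Hj; rewrite /f !nseqSr.
  apply derivable_pt_lim_minus; apply (line_deriv HD Hj); apply size_nseq.
have Hbd : forall s, 0 <= s <= 1 -> Rabs (f p s - f p 0) <= K * s.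
  move=> s [Hs0 Hs1].
  rewrite /f !Hx0.
  set a := vadd x (vscale s k). set b := vadd x (vscale s h).
  have -> : D p a (nseq p k) - D p b (nseq p h) - (D p x (nseq p k) - D p x (nseq p h)) =
    (D p a (nseq p k) - D p b (nseq p k)) +
    ((D p b (nseq p k) - D p x (nseq p k)) - (D p b (nseq p h) - D p x (nseq p h))) by ring.
  apply: Rle_trans; first apply Rabs_triang.
  have T1 := lip_gen a b (size_nseq p k).
  have Eab : vsub a b = vscale s (vscale t u) by rewrite -Ekh /a /b; vext.
  rewrite Eab vnorm_scale Ntu (Rabs_pos_eq s Hs0) prodn_nseq in T1.
  have Ebx : vsub b x = vscale s h by rewrite /b; vext.
  have T2 := @telescope d p (fun w => D p b w - D p x w) (Lp * vnorm (vsub b x)) k h M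
    (ml_diff (mlD HD _ (leqnn p)) (mlD HD _ (leqnn p)))
    (Rmult_le_pos _ _ HLp (vnorm_ge0 _)) (fun w Hw => lip_gen b x Hw) HkM HhM p [::] (erefl _).
  rewrite /= Ekh Ntu Ebx vnorm_scale (Rabs_pos_eq s Hs0) Rmult_1_r in T2.
  have Hkp : vnorm k ^ p <= M ^ p by apply pow_incr; split => //; apply vnorm_ge0.
  have Hap := @aux_pow p (vnorm h) M (conj Hh0 HhM).
  have HM0 : 0 <= M ^ p by apply pow_le; lra.
  have HLs : 0 <= Lp * s * t * vnorm u by apply Rmult_le_pos; [apply Rmult_le_pos; [apply Rmult_le_pos|]|] => //.
  rewrite /K S_INR.
  have : Lp * (s * (t * vnorm u)) * vnorm k ^ p <= Lp * s * t * vnorm u * M ^ p.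
    have -> : Lp * (s * (t * vnorm u)) * vnorm k ^ p = (Lp * s * t * vnorm u) * vnorm k ^ p by ring.
    by apply Rmult_le_compat_l.
  have : Lp * (s * vnorm h) * INR p * (t * vnorm u) * M ^ p.-1 <= Lp * s * t * vnorm u * (INR p * M ^ p).
    have -> : Lp * (s * vnorm h) * INR p * (t * vnorm u) * M ^ p.-1 =
      (Lp * s * t * vnorm u) * (INR p * (vnorm h * M ^ p.-1)) by ring.
    by apply Rmult_le_compat_l.
  lra.
have := HT Hder Hbd 1 (conj Rle_0_1 (Rle_refl 1)).
have -> : f 0%N 1 = D 0%N z [::] - D 0%N y [::].
  rewrite /f /=; congr (D 0%N _ _ - D 0%N _ _).
  - by rewrite /k /z; vext.
  - by rewrite /h; vext.
have -> : tsum f p 1 = taylor D p x z - taylor D p x y.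
  rewrite /tsum /taylor -big_sub; apply eq_bigr => j _.
  rewrite /f !Hx0 pow1 -/k -/h; field; apply Rgt_not_eq, INR_fact_pos.
rewrite pow1 INR_factS /K => H.
have -> : Lp * t * vnorm u * M ^ p / INR (p`!) = Lp * t * vnorm u * INR p.+1 * M ^ p * 1 / (INR p.+1 * INR (p`!)).
  field; split; [apply Rgt_not_eq, INR_fact_pos | rewrite S_INR; have := pos_INR p; lra].
apply: Rle_trans; last exact H.
right; f_equal; ring.
Qed.
End EB.

Lemma lin1_sum d (T : seq (vec d) -> R) (HT : multilinear 1 T) (s : seq 'I_d) (c : 'I_d -> R) :
  T [:: fun j => \big[Rplus/0]_(i <- s) (c i * basis i j)] = \big[Rplus/0]_(i <- s) (c i * T [:: basis i]).
Proof.
elim: s => [|i s IH].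
  have -> : (fun j : 'I_d => \big[Rplus/0]_(i <- [::]) (c i * basis i j)) =
    vadd (vscale 0 (fun _ => 0)) (vscale 0 (fun _ => 0)).
    by apply functional_extensionality => j; rewrite big_nil /vadd /vscale; ring.
  rewrite big_nil; have := HT [::] [::] 0 0 (fun _ => 0) (fun _ => 0) (erefl _) => /= ->; ring.
have -> : (fun j : 'I_d => \big[Rplus/0]_(i0 <- i :: s) (c i0 * basis i0 j)) =
  vadd (vscale (c i) (basis i)) (vscale 1 (fun j => \big[Rplus/0]_(i0 <- s) (c i0 * basis i0 j))).
  by apply functional_extensionality => j; rewrite big_cons /vadd /vscale; ring.
have := HT [::] [::] (c i) 1 (basis i) (fun j => \big[Rplus/0]_(i0 <- s) (c i0 * basis i0 j)) (erefl _) => /= ->.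
rewrite IH big_cons; ring.
Qed.

Lemma grad_dot d (D : nat -> vec d -> seq (vec d) -> R) y w :
  multilinear 1 (D 1%N y) -> dot (grad D y) w = D 1%N y [:: w].
Proof.
move=> HT.
have Ew : w = fun j => \big[Rplus/0]_(i <- index_enum 'I_d) (w i * basis i j).
  apply functional_extensionality => j.
  rewrite (bigD1 j) //= big1 /basis ?eqxx; first by cbn; ring.
  by move=> i /negbTE Hij; rewrite eq_sym Hij; ring.
rewrite {2}Ew lin1_sum // /dot /grad; apply eq_bigr => i _; ring.
Qed.

Lemma deriv_upper (f : R -> R) x l : derivable_pt_lim f x l ->
  forall eps, 0 < eps -> exists delta, 0 < delta /\
  forall t, 0 < t < delta -> f (x + t) - f x <= t * (l + eps).
Proof.
move=> H eps He; have [del Hd] := H eps He.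
exists del; split; first exact: cond_pos.
move=> t [Ht1 Ht2].
have := Hd t (Rgt_not_eq _ _ Ht1); rewrite (Rabs_pos_eq t); last lra.
move=> /(_ Ht2) H1.
have H2 := Rle_abs ((f (x + t) - f x) / t - l).
have -> : f (x + t) - f x = t * ((f (x + t) - f x) / t) by field; lra.
apply Rmult_le_compat_l; lra.
Qed.

Lemma pow_small t p : 0 <= t <= 1 -> (1 <= p)%N -> t ^ p.+1 <= t * t.
Proof.
move=> Ht; case: p => [|p] // _.
change (t ^ p.+2) with (t * (t * t ^ p)).
rewrite -Rmult_assoc; have := Rmult_1_r (t * t) => E.
have : t ^ p <= 1 by rewrite -(pow1 p); apply pow_incr; lra.
have : 0 <= t ^ p by apply pow_le; lra.
have : 0 <= t * t by nra.
nra.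
Qed.

Lemma N_upper d p (h u : vec d) : (1 <= p)%N ->
  forall eps, 0 < eps -> exists delta, 0 < delta /\ forall t, 0 < t < delta ->
  vnorm (vadd h (vscale t u)) ^ p.+1 - vnorm h ^ p.+1 <=
    t * (INR p.+1 * vnorm h ^ (p - 1) * dot h u + eps).
Proof.
move=> Hp eps He.
have Hh0 := vnorm_ge0 h. have Hu0 := vnorm_ge0 u.
case: (Rle_lt_or_eq_dec _ _ Hh0) => Hr.
-
  set A := dot h h. set X := dot h u. set B := dot u u.
  have HA : 0 < A by rewrite /A -vnorm_sq; nra.
  set q := fun t => A + 2 * t * X + t * t * B.
  have Hq : derivable_pt_lim q 0 (2 * X).
    apply: (dpl_ext (g := fun t => A + (2 * X) * t + B * (t * t))).
      by move=> t; rewrite /q; ring.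
    apply: dpl_eq; last first.
      apply derivable_pt_lim_plus; first apply derivable_pt_lim_plus.
      + apply derivable_pt_lim_const.
      + apply derivable_pt_lim_scal, derivable_pt_lim_id.
      + apply derivable_pt_lim_scal, derivable_pt_lim_mult; apply derivable_pt_lim_id.
    change (id 0) with 0; ring.
  have Hq0 : q 0 = A by rewrite /q; ring.
  have Hs : derivable_pt_lim (Ranalysis1.comp sqrt q) 0 (/ (2 * sqrt A) * (2 * X)).
    apply derivable_pt_lim_comp => //; rewrite Hq0; exact: derivable_pt_lim_sqrt.
  have Hpw := derivable_pt_lim_comp _ _ _ _ _ Hs (derivable_pt_lim_pow (Ranalysis1.comp sqrt q 0) p.+1).
  have Hf : forall t, vnorm (vadd h (vscale t u)) ^ p.+1 = Ranalysis1.comp (pow^~ p.+1) (Ranalysis1.comp sqrt q) t.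
    by move=> t; rewrite /Ranalysis1.comp /q /vnorm dot_expand.
  have Hd := dpl_ext Hf Hpw.
  have [del [Hdel Hb]] := deriv_upper Hd He.
  exists del; split => // t Ht.
  have := Hb t Ht; rewrite Rplus_0_l !Hf.
  have -> : vnorm h = sqrt A by [].
  have E0 : Ranalysis1.comp (pow^~ p.+1) (Ranalysis1.comp sqrt q) 0 = sqrt A ^ p.+1
    by rewrite /Ranalysis1.comp Hq0.
  have E1 : Ranalysis1.comp sqrt q 0 = sqrt A by rewrite /Ranalysis1.comp Hq0.
  rewrite E0 E1.
  have HsA : 0 < sqrt A by apply sqrt_lt_R0.
  have -> : INR p.+1 * sqrt A ^ p.+1.-1 * (/ (2 * sqrt A) * (2 * X)) = INR p.+1 * sqrt A ^ (p - 1) * X.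
    clear Hpw Hd Hb Hf E0 E1; case: p Hp => [|p] // _.
    rewrite subn1 /=; field; lra.
  by [].
-
  have HX : dot h u = 0.
    have := cs h u; rewrite -Hr Rmult_0_l => H.
    have H1 := Rle_abs (dot h u). have H2 := Rle_abs (- dot h u).
    rewrite Rabs_Ropp in H2. lra.
  set U := vnorm u ^ p.+1.
  have HU : 0 <= U by apply pow_le.
  exists (Rmin 1 (eps / (U + 1))); split.
    apply Rmin_pos; first lra; apply Rdiv_lt_0_compat; lra.
  move=> t [Ht1 Ht2].
  have Ht3 : t <= 1 by have := Rmin_l 1 (eps / (U + 1)); lra.
  have Ht4 : t < eps / (U + 1) by have := Rmin_r 1 (eps / (U + 1)); lra.
  have Hn : vnorm (vadd h (vscale t u)) <= t * vnorm u.
    have := vnorm_tri h u (Rlt_le _ _ Ht1); lra.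
  have Hpw : vnorm (vadd h (vscale t u)) ^ p.+1 <= (t * vnorm u) ^ p.+1.
    apply pow_incr; split => //; apply vnorm_ge0.
  rewrite -Hr HX pow_i; last by apply/ltP.
  have -> : INR p.+1 * 0 ^ (p - 1) * 0 + eps = eps by ring.
  rewrite Rminus_0_r.
  apply: Rle_trans; first exact Hpw.
  rewrite Rpow_mult_distr -/U.
  have := @pow_small t p (conj (Rlt_le _ _ Ht1) Ht3) Hp.
  have : 0 <= t ^ p.+1 by apply pow_le; lra.
  have : t * (U + 1) < eps.
    have E : eps / (U + 1) * (U + 1) = eps by field; lra.
    rewrite -{1}E; apply Rmult_lt_compat_r; lra.
  nra.
Qed.

Lemma pow_lin_deriv r a p : derivable_pt_lim (fun t => (r + t * a) ^ p) 0 (INR p * (r + 0 * a) ^ p.-1 * a).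
Proof.
have H1 : derivable_pt_lim (fun t => r + t * a) 0 a.
  apply: (dpl_ext (g := fun t => r + mult_real_fct a id t)).
    by move=> t; rewrite /mult_real_fct /id; ring.
  apply: dpl_eq; last first.
    apply derivable_pt_lim_plus; [apply derivable_pt_lim_const | apply derivable_pt_lim_scal, derivable_pt_lim_id].
  ring.
have := derivable_pt_lim_comp _ _ _ _ _ H1 (derivable_pt_lim_pow (r + 0 * a) p).
apply: dpl_ext => t; by rewrite /Ranalysis1.comp.
Qed.

Lemma ge_of_eps X Y : (forall eps, 0 < eps -> Y - eps <= X) -> Y <= X.
Proof.
move=> H; case: (Rle_or_lt Y X) => // HYX.
have := H ((Y - X) / 2); lra.
Qed.

Section KEY.
Variables (d p : nat) (g : vec d -> R) (D : nat -> vec d -> seq (vec d) -> R) (Lp L : R) (T : vec d -> vec d).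
Hypothesis Hp : (1 <= p)%N.
Hypothesis HD : derivs_of g p D.
Hypothesis HLp : 0 < Lp.
Hypothesis HL : top_deriv_lipschitz D p Lp.
Hypothesis HL0 : 0 <= L.
Hypothesis HT : forall x y : vec d, reg_model D p Lp L x (T x) <= reg_model D p Lp L x y.

Lemma key x u :
  - (Lp * vnorm (vsub (T x) x) ^ p / INR (p`!) * vnorm u) <=
  D 1%N (T x) [:: u] + omega_p Lp L p (vnorm (vsub (T x) x)) * dot (vsub (T x) x) u.
Proof.
set y := T x. set h := vsub y x. set r := vnorm h.
set c := (Lp + L) / INR (p`!).
have Hf := INR_fact_pos p.
have Hc : 0 < c by apply Rdiv_lt_0_compat; lra.
have Hom : omega_p Lp L p r = c * INR p.+1 * r ^ (p - 1) by rewrite /omega_p /c; field; lra.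
set Cst := Lp * vnorm u / INR (p`!).
have HCst : 0 <= Cst by apply Rmult_le_pos; [apply Rmult_le_pos; [lra | apply vnorm_ge0] | left; apply Rinv_0_lt_compat].
have Hu0 := vnorm_ge0 u.
apply ge_of_eps => eps He.
have He4 : 0 < eps / 4 by lra.
have Hd0 := line_deriv HD Hp y u 0 (erefl (size (@nil (vec d)))).
have [d1 [Hd1 B1]] := deriv_upper Hd0 He4.
have Ey0 : vadd y (vscale 0 u) = y by vext.
rewrite Ey0 /= in B1.
have Hec : 0 < eps / 4 / c by apply Rdiv_lt_0_compat.
have [d2 [Hd2 B2]] := N_upper h u Hp Hec.
have Hpl := pow_lin_deriv r (vnorm u) p.
have [d3 [Hd3 B3]] := deriv_upper Hpl Rlt_0_1.
set l := INR p * (r + 0 * vnorm u) ^ p.-1 * vnorm u.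
set d4 := eps / 4 / (Cst * (Rabs l + 1) + 1).
have Hd4 : 0 < d4 by apply Rdiv_lt_0_compat => //; have := Rabs_pos l; nra.
set t := Rmin (Rmin d1 d2) (Rmin d3 d4) / 2.
have Ht0 : 0 < t by rewrite /t; apply Rdiv_lt_0_compat; [repeat apply Rmin_pos|] => //; lra.
have Hm1 := Rmin_l (Rmin d1 d2) (Rmin d3 d4).
have Hm2 := Rmin_r (Rmin d1 d2) (Rmin d3 d4).
have := Rmin_l d1 d2; have := Rmin_r d1 d2; have := Rmin_l d3 d4; have := Rmin_r d3 d4.
move=> m1 m2 m3 m4.
have Ht1 : t < d1 by rewrite /t; lra.
have Ht2 : t < d2 by rewrite /t; lra.
have Ht3 : t < d3 by rewrite /t; lra.
have Ht4 : t < d4 by rewrite /t; lra.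
set z := vadd y (vscale t u).
have {}B1 := B1 t (conj Ht0 Ht1). rewrite Rplus_0_l -/z in B1.
have {}B2 := B2 t (conj Ht0 Ht2).
have Ez : vsub z x = vadd h (vscale t u) by rewrite /z /h; vext.
have {}B3 := B3 t (conj Ht0 Ht3). rewrite Rplus_0_l Rmult_0_l Rplus_0_r -/l in B3.
have B4 := e_bound HD HL x y u (Rlt_le _ _ HLp) (Rlt_le _ _ Ht0).
have B5 := HT x z.
rewrite /reg_model -/y Ez -/h -/r -/c in B5.
rewrite -/z -/h -/r in B4.
have [B4a B4b] := abs_le_both B4.
have B6 : Lp * t * vnorm u * (r + t * vnorm u) ^ p / INR (p`!) <= t * (Cst * r ^ p + eps / 4).
  have -> : Lp * t * vnorm u * (r + t * vnorm u) ^ p / INR (p`!) = t * (Cst * (r + t * vnorm u) ^ p)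
    by rewrite /Cst; field; lra.
  apply Rmult_le_compat_l; first lra.
  have H : (r + t * vnorm u) ^ p <= r ^ p + t * (Rabs l + 1).
    have Hl : INR p * r ^ p.-1 * vnorm u <= Rabs l by rewrite /l Rmult_0_l Rplus_0_r; apply Rle_abs.
    nra.
  have H' : Cst * (t * (Rabs l + 1)) <= eps / 4.
    have : t * (Cst * (Rabs l + 1) + 1) <= eps / 4.
      have E : d4 * (Cst * (Rabs l + 1) + 1) = eps / 4 by rewrite /d4; field; have := Rabs_pos l; nra.
      rewrite -E; apply Rmult_le_compat_r; [have := Rabs_pos l; nra | lra].
    have := Rabs_pos l; nra.
  nra.
have Hfin : 0 <= t * (D 1%N y [:: u] + omega_p Lp L p r * dot h u + Cst * r ^ p + eps).
  rewrite Hom.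
  have Hc2 : c * (vnorm (vadd h (vscale t u)) ^ p.+1 - r ^ p.+1) <=
    t * (c * INR p.+1 * r ^ (p - 1) * dot h u + eps / 4).
    have := Rmult_le_compat_l c _ _ (Rlt_le _ _ Hc) B2.
    have -> : c * (t * (INR p.+1 * vnorm h ^ (p - 1) * dot h u + eps / 4 / c)) =
      t * (c * INR p.+1 * r ^ (p - 1) * dot h u + eps / 4) by rewrite /r; field; lra.
    by [].
  rewrite !Rmult_plus_distr_l in B1 B6 Hc2 *; have : 0 <= t * eps by apply Rmult_le_pos; lra.
  lra.
have : 0 <= D 1%N y [:: u] + omega_p Lp L p r * dot h u + Cst * r ^ p + eps.
  apply (Rmult_le_reg_l t) => //; lra.
have -> : Lp * r ^ p / INR (p`!) * vnorm u = Cst * r ^ p by rewrite /Cst; field; lra.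
lra.
Qed.
End KEY.

Unset Implicit Arguments.
Set Strict Implicit.

Theorem mainTheorem19 (d p : nat) (g : vec d -> R)
    (D : nat -> vec d -> seq (vec d) -> R) (Lp L : R) (T : vec d -> vec d) :
  (1 <= p)%N ->
  derivs_of g p D ->
  0 < Lp ->
  top_deriv_lipschitz D p Lp ->
  0 <= L ->
  (forall x y : vec d, reg_model D p Lp L x (T x) <= reg_model D p Lp L x y) ->
  approx_prox_oracle (grad D) (omega_p Lp L p)
    (/ (1 + INR p) * / (1 + L / Lp)) 0 T.
Proof.
move=> Hp HD HLp HL HL0 HT x.
have K := key Hp HD HLp HL HL0 HT x.
set y := T x in K *. set h := vsub y x in K *. set r := vnorm h in K *.
set w := omega_p Lp L p r in K *.
set W := vadd (grad D y) (vscale w h).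
have K1 := K (vscale (-1) W).
have Hml : multilinear 1 (D 1%N y) by apply (mlD HD).
have E1 : D 1%N y [:: vscale (-1) W] = - D 1%N y [:: W].
  have := @ml_scale d 1 (D 1%N y) [::] [::] (-1) W Hml (erefl _) => /= ->; ring.
rewrite E1 dot_scaler vnorm_scale Rabs_Ropp Rabs_R1 Rmult_1_l in K1.
have EW : dot W W = D 1%N y [:: W] + w * dot h W.
  by rewrite /W dot_addl dot_scalel grad_dot.
set B := Lp * r ^ p / INR (p`!).
have Hf := INR_fact_pos p.
have HB : 0 <= B.
  apply Rmult_le_pos; [apply Rmult_le_pos; [lra | apply pow_le, vnorm_ge0] | left; apply Rinv_0_lt_compat => //].
have HWW : vnorm W * vnorm W <= B * vnorm W.
  rewrite vnorm_sq EW; rewrite -/B in K1; lra.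
have HW : vnorm W <= B.
  have := vnorm_ge0 W => H0.
  case: (Rle_lt_or_eq_dec _ _ H0) => H1; last by rewrite -H1.
  apply (Rmult_le_reg_r (vnorm W)) => //.
have -> : / (1 + INR p) * / (1 + L / Lp) * w * r + 0 = B.
  rewrite /w /B /omega_p.
  case: p Hp {HD HL HT K K1 E1 HWW HW HB Hml Hf W EW w B} => [|p] // _.
  rewrite subn1; change (p.+1.-1) with p; rewrite !S_INR.
  have := pos_INR p; have := INR_fact_pos p.+1 => H1 H2.
  change (r ^ p.+1) with (r * r ^ p); field; repeat split; try lra.
exact HW.
Qed.
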